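(* Let $(x^1,x^2,z)$ be real coordinates, $a,b\in\{1,2\}$, let $g_{ab}$ be functions of $(x^1,x^2,z)$ forming a matrix of Euclidean signature, let $|\tilde g|=(\det g_{ab})^{1/2}$, let $\beta_a$ and $\beta>0$ be functions of $(x^1,x^2)$ only (i.e. $\beta_{a,z}=\beta_{,z}=0$), and let $c$ be a constant. Then the momentum constraint $\nabla_iT^{ij}=0$ is satisfied by each of the following data: (1) $g=\beta|\tilde g|^{-2/3}(dz+\beta_adx^a)^2+g_{ab}dx^adx^b$ and $\pm T^{ij}=\delta^i_z\delta^j_z+\big(c+\tfrac12\beta|\tilde g|^{-2/3}\big)g^{ij}$; (2) $g=(dz+\beta_adx^a)^2+g_{ab}dx^adx^b$ and $\pm T^{ij}=\beta|\tilde g|^{-1}\delta^i_z\delta^j_z+c\,g^{ij}$. Moreover, the function $\beta$ can be transformed to $1$ by a change of the coordinates $x^a$.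
   Context: Initial data: Riemannian metric $g_{ij}$ and symmetric tensor $K_{ij}$ on a 3-manifold; $H=g^{ij}K_{ij}$, $T^{ij}=K^{ij}-Hg^{ij}$. Momentum constraint: $\nabla_iT^{ij}=0$, with $\nabla$ the Levi-Civita connection of $g$. *)

(* Defs.v *)
From Stdlib Require Import Reals.
From Coquelicot Require Import Coquelicot.
Open Scope R_scope.

Inductive idx := I1 | I2 | IZ.

Definition sum3 (f : idx -> R) : R := f I1 + f I2 + f IZ.

Definition Field3 := R -> R -> R -> R.
Definition Field2 := R -> R -> R.
Definition Tensor := idx -> idx -> Field3.

Definition pd (i : idx) (f : Field3) (x1 x2 z : R) : R :=
  match i with
  | I1 => Derive (fun t => f t x2 z) x1
  | I2 => Derive (fun t => f x1 t z) x2
  | IZ => Derive (fun t => f x1 x2 t) z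
  end.

Definition ex_pd (i : idx) (f : Field3) (x1 x2 z : R) : Prop :=
  match i with
  | I1 => ex_derive (fun t => f t x2 z) x1
  | I2 => ex_derive (fun t => f x1 t z) x2
  | IZ => ex_derive (fun t => f x1 x2 t) z
  end.

Definition pd2 (i : idx) (f : Field2) (x1 x2 : R) : R :=
  match i with
  | I1 => Derive (fun t => f t x2) x1
  | I2 => Derive (fun t => f x1 t) x2
  | IZ => 0
  end.

Definition ex_pd2 (i : idx) (f : Field2) (x1 x2 : R) : Prop :=
  match i with
  | I1 => ex_derive (fun t => f t x2) x1
  | I2 => ex_derive (fun t => f x1 t) x2
  | IZ => True
  end.

Definition open3 (U : R -> R -> R -> Prop) : Prop :=
  open (fun q : R * R * R => U (fst (fst q)) (snd (fst q)) (snd q)).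
Definition open2 (V : R -> R -> Prop) : Prop :=
  open (fun q : R * R => V (fst q) (snd q)).

Definition C1_3 (U : R -> R -> R -> Prop) (f : Field3) : Prop :=
  forall x1 x2 z, U x1 x2 z -> forall i,
    ex_pd i f x1 x2 z /\
    continuous (fun q : R * R * R => pd i f (fst (fst q)) (snd (fst q)) (snd q))
               (x1, x2, z).

Definition C1_2 (D : R -> R -> Prop) (f : Field2) : Prop :=
  forall x1 x2, D x1 x2 ->
    continuous (fun q : R * R => f (fst q) (snd q)) (x1, x2) /\
    forall i, ex_pd2 i f x1 x2 /\
    continuous (fun q : R * R => pd2 i f (fst q) (snd q)) (x1, x2).

(** 3x3 linear algebra: signed cofactors (cyclic formula), determinant,
    inverse matrix. *)
Definition nxt (i : idx) : idx := match i with I1 => I2 | I2 => IZ | IZ => I1 end.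

Definition cof (M : idx -> idx -> R) (i j : idx) : R :=
  M (nxt i) (nxt j) * M (nxt (nxt i)) (nxt (nxt j))
  - M (nxt i) (nxt (nxt j)) * M (nxt (nxt i)) (nxt j).

Definition det3 (M : idx -> idx -> R) : R := sum3 (fun j => M I1 j * cof M I1 j).

Definition inv3 (M : idx -> idx -> R) (i j : idx) : R := cof M j i / det3 M.

Definition ginv (G : Tensor) : Tensor :=
  fun i j x1 x2 z => inv3 (fun k l => G k l x1 x2 z) i j.

Definition christoffel (G : Tensor) (k i j : idx) : Field3 :=
  fun x1 x2 z => / 2 * sum3 (fun l => ginv G k l x1 x2 z *
     (pd i (G j l) x1 x2 z + pd j (G i l) x1 x2 z - pd l (G i j) x1 x2 z)).

Definition divT (G T : Tensor) (j : idx) : Field3 :=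
  fun x1 x2 z =>
    sum3 (fun i => pd i (T i j) x1 x2 z)
    + sum3 (fun i => sum3 (fun k => christoffel G i i k x1 x2 z * T k j x1 x2 z))
    + sum3 (fun i => sum3 (fun k => christoffel G j i k x1 x2 z * T i k x1 x2 z)).

Definition momentum_constraint (U : R -> R -> R -> Prop) (G T : Tensor) : Prop :=
  forall x1 x2 z, U x1 x2 z -> forall j, divT G T j x1 x2 z = 0.

Definition det2 (g11 g12 g22 : Field3) : Field3 :=
  fun x1 x2 z => g11 x1 x2 z * g22 x1 x2 z - g12 x1 x2 z * g12 x1 x2 z.

Definition absg (g11 g12 g22 : Field3) : Field3 :=
  fun x1 x2 z => sqrt (det2 g11 g12 g22 x1 x2 z).

Definition gab (g11 g12 g22 : Field3) : Tensor :=
  fun i j => match i, j with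
  | I1, I1 => g11 | I1, I2 => g12 | I2, I1 => g12 | I2, I2 => g22
  | _, _ => fun _ _ _ => 0 end.

Definition theta (b1 b2 : Field2) (i : idx) : Field2 :=
  match i with I1 => b1 | I2 => b2 | IZ => fun _ _ => 1 end.

Definition dzz (i j : idx) : R :=
  match i, j with IZ, IZ => 1 | _, _ => 0 end.

Definition metric_form (w : Field3) (g11 g12 g22 : Field3) (b1 b2 : Field2) : Tensor :=
  fun i j x1 x2 z => w x1 x2 z * theta b1 b2 i x1 x2 * theta b1 b2 j x1 x2
                     + gab g11 g12 g22 i j x1 x2 z.

Definition w1 (b : Field2) (g11 g12 g22 : Field3) : Field3 :=
  fun x1 x2 z => b x1 x2 * Rpower (absg g11 g12 g22 x1 x2 z) (- (2 / 3)).

Definition metric1 (b : Field2) (g11 g12 g22 : Field3) (b1 b2 : Field2) : Tensor :=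
  metric_form (w1 b g11 g12 g22) g11 g12 g22 b1 b2.

(** s = +1 or -1 encodes the sign in "+- T^{ij}". *)
Definition T1 (s c : R) (b : Field2) (g11 g12 g22 : Field3) (b1 b2 : Field2) : Tensor :=
  fun i j x1 x2 z => s * (dzz i j + (c + / 2 * w1 b g11 g12 g22 x1 x2 z)
                            * ginv (metric1 b g11 g12 g22 b1 b2) i j x1 x2 z).

Definition metric2 (g11 g12 g22 : Field3) (b1 b2 : Field2) : Tensor :=
  metric_form (fun _ _ _ => 1) g11 g12 g22 b1 b2.

Definition T2 (s c : R) (b : Field2) (g11 g12 g22 : Field3) (b1 b2 : Field2) : Tensor :=
  fun i j x1 x2 z => s * (b x1 x2 / absg g11 g12 g22 x1 x2 z * dzz i j
                            + c * ginv (metric2 g11 g12 g22 b1 b2) i j x1 x2 z).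

Definition jac (phi1 phi2 : Field2) (k i : idx) (x1 x2 : R) : R :=
  match k with
  | I1 => pd2 i phi1 x1 x2
  | I2 => pd2 i phi2 x1 x2
  | IZ => match i with IZ => 1 | _ => 0 end
  end.

Definition coord_change (V : R -> R -> Prop) (phi1 phi2 : Field2) : Prop :=
  C1_2 V phi1 /\ C1_2 V phi2 /\
  (forall x1 x2 y1 y2, V x1 x2 -> V y1 y2 ->
      phi1 x1 x2 = phi1 y1 y2 -> phi2 x1 x2 = phi2 y1 y2 -> x1 = y1 /\ x2 = y2) /\
  (forall x1 x2, V x1 x2 ->
      pd2 I1 phi1 x1 x2 * pd2 I2 phi2 x1 x2 - pd2 I2 phi1 x1 x2 * pd2 I1 phi2 x1 x2 <> 0).

Definition transforms_to (U : R -> R -> R -> Prop) (V : R -> R -> Prop)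
    (phi1 phi2 : Field2) (G T G' T' : Tensor) : Prop :=
  forall x1 x2 z, U x1 x2 z -> V x1 x2 ->
    (forall i j, G i j x1 x2 z =
       sum3 (fun k => sum3 (fun l => jac phi1 phi2 k i x1 x2 * jac phi1 phi2 l j x1 x2
                                     * G' k l (phi1 x1 x2) (phi2 x1 x2) z))) /\
    (forall k l, T' k l (phi1 x1 x2) (phi2 x1 x2) z =
       sum3 (fun i => sum3 (fun j => jac phi1 phi2 k i x1 x2 * jac phi1 phi2 l j x1 x2
                                     * T i j x1 x2 z))).

(* Main.v *)
Require Import Defs.
From Stdlib Require Import Reals Lra FunctionalExtensionality ClassicalEpsilon.
From Coquelicot Require Import Coquelicot.
Open Scope R_scope.

Definition lin (k : idx) (f : Field3) (x1 x2 z : R) : R -> R :=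
  match k with I1 => fun t => f t x2 z | I2 => fun t => f x1 t z | IZ => fun t => f x1 x2 t end.
Definition crd (k : idx) (x1 x2 z : R) : R := match k with I1 => x1 | I2 => x2 | IZ => z end.
Definition hd k f x1 x2 z d := is_derive (lin k f x1 x2 z) (crd k x1 x2 z) d.

Lemma hd_pd k f x1 x2 z d : hd k f x1 x2 z d -> pd k f x1 x2 z = d.
Proof. unfold hd; destruct k; simpl; apply is_derive_unique. Qed.

Lemma hd_ex k f x1 x2 z : ex_pd k f x1 x2 z -> hd k f x1 x2 z (pd k f x1 x2 z).
Proof. unfold hd; destruct k; simpl; apply Derive_correct. Qed.

Lemma hd_lift k (b : Field2) x1 x2 z : ex_pd2 k b x1 x2 ->
  hd k (fun a c _ => b a c) x1 x2 z (pd2 k b x1 x2).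
Proof. unfold hd; destruct k; simpl; intros H; try apply Derive_correct; auto.
auto_derive; auto. Qed.

Lemma hd_const k (c : R) x1 x2 z : hd k (fun _ _ _ => c) x1 x2 z 0.
Proof. unfold hd; destruct k; simpl; auto_derive; auto. Qed.

Lemma hd_plus k f g x1 x2 z df dg : hd k f x1 x2 z df -> hd k g x1 x2 z dg ->
  hd k (fun a b c => f a b c + g a b c) x1 x2 z (df + dg).
Proof. unfold hd; destruct k; simpl; intros H H0; exact (is_derive_plus _ _ _ _ _ H H0). Qed.

Lemma hd_mult k f g x1 x2 z df dg : hd k f x1 x2 z df -> hd k g x1 x2 z dg ->
  hd k (fun a b c => f a b c * g a b c) x1 x2 z (df * g x1 x2 z + f x1 x2 z * dg).
Proof. unfold hd; destruct k; simpl; intros H H0; exact (is_derive_mult _ _ _ _ _ H H0 Rmult_comm). Qed.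

Lemma hd_comp k f (h : R -> R) x1 x2 z df dh : hd k f x1 x2 z df ->
  is_derive h (f x1 x2 z) dh ->
  hd k (fun a b c => h (f a b c)) x1 x2 z (dh * df).
Proof. unfold hd; destruct k; simpl; intros H1 H2;
  (replace (dh * df) with (scal df dh) by (unfold scal; simpl; unfold mult; simpl; ring));
  exact (is_derive_comp h _ _ _ _ H2 H1). Qed.

Lemma inv3_deriv (m : idx -> idx -> R -> R) (dm : idx -> idx -> R) t0 i j :
  (forall a b, is_derive (m a b) t0 (dm a b)) ->
  det3 (fun a b => m a b t0) <> 0 ->
  is_derive (fun t => inv3 (fun a b => m a b t) i j) t0
   (- sum3 (fun a => sum3 (fun b => inv3 (fun a b => m a b t0) i a * dm a b * inv3 (fun a b => m a b t0) b j))).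
Proof.
intros H Hd.
assert (HD : forall a b, Derive (m a b) t0 = dm a b) by (intros; apply is_derive_unique; auto).
assert (HE : forall a b, ex_derive (m a b) t0) by (intros; eexists; eauto).
destruct i, j; cbv [sum3 inv3 cof det3 nxt] in *;
auto_derive; try solve [repeat split; auto]; rewrite ?HD; field; auto.
Qed.

Lemma hd_ginv k G x1 x2 z (dM : idx -> idx -> R) a b :
  (forall c d, hd k (G c d) x1 x2 z (dM c d)) ->
  det3 (fun c d => G c d x1 x2 z) <> 0 ->
  hd k (ginv G a b) x1 x2 z
    (- sum3 (fun p => sum3 (fun q => ginv G a p x1 x2 z * dM p q * ginv G q b x1 x2 z))).
Proof.
intros H Hd.
pose proof (inv3_deriv (fun c d => lin k (G c d) x1 x2 z) dM (crd k x1 x2 z) a b H) as X.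
unfold hd; destruct k; simpl in *; apply X; auto.
Qed.

Lemma der_A (D : R) : 0 < D ->
  is_derive (fun y => Rpower (sqrt y) (- (2 / 3))) D (Rpower (sqrt D) (- (2 / 3)) * (- / 3) / D).
Proof.
intros HD. unfold Rpower.
auto_derive.
- split; auto. split; [apply sqrt_lt_R0; auto| auto].
- pose proof (sqrt_lt_R0 D HD). pose proof (sqrt_sqrt D). set (s := sqrt D) in *. clearbody s. rewrite <- H0 by lra. field. lra.
Qed.

Lemma der_isq (D : R) : 0 < D ->
  is_derive (fun y => / sqrt y) D (- / 2 * / sqrt D / D).
Proof.
intros HD. pose proof (sqrt_lt_R0 D HD).
auto_derive.
- split; auto. lra.
- pose proof (sqrt_sqrt D). set (s := sqrt D) in *. clearbody s. rewrite <- H0 by lra. field. lra.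
Qed.

Definition th (u v : R) (a : idx) : R := match a with I1 => u | I2 => v | IZ => 1 end.
Definition th0 (u v : R) (a : idx) : R := match a with I1 => u | I2 => v | IZ => 0 end.
Definition gm (p q r : R) (a b : idx) : R :=
  match a, b with I1, I1 => p | I1, I2 => q | I2, I1 => q | I2, I2 => r | _, _ => 0 end.
Definition Mx (w u v p q r : R) (a b : idx) : R := w * th u v a * th u v b + gm p q r a b.
Definition dMx (w dw u v du dv dp dq dr : R) (a b : idx) : R :=
  dw * th u v a * th u v b + w * (th0 du dv a * th u v b + th u v a * th0 du dv b) + gm dp dq dr a b.

Definition Gam (N : idx -> idx -> R) (dM : idx -> idx -> idx -> R) k i j :=
  / 2 * sum3 (fun l => N k l * (dM i j l + dM j i l - dM l i j)).

Lemma det_Mx w u v p q r : det3 (Mx w u v p q r) = w * (p * r - q * q).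
Proof. cbv [det3 sum3 cof nxt Mx th gm]. ring. Qed.

Lemma divT_eq G T x1 x2 z (dM dT : idx -> idx -> idx -> R) j :
  (forall l a b, pd l (G a b) x1 x2 z = dM l a b) ->
  (forall k a b, pd k (T a b) x1 x2 z = dT k a b) ->
  divT G T j x1 x2 z = sum3 (fun i => dT i i j)
   + sum3 (fun i => sum3 (fun k => Gam (fun a b => ginv G a b x1 x2 z) dM i i k * T k j x1 x2 z))
   + sum3 (fun i => sum3 (fun k => Gam (fun a b => ginv G a b x1 x2 z) dM j i k * T i k x1 x2 z)).
Proof.
intros H1 H2. unfold divT, christoffel, Gam. cbv [sum3]. rewrite !H1, !H2. reflexivity.
Qed.

Lemma div_reduce (N : idx -> idx -> R) (dM : idx -> idx -> idx -> R) (X : idx -> idx -> R)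
  (dX : idx -> idx -> idx -> R) F (dF : idx -> R) s j :
  (forall a b, N a b = N b a) -> (forall k a b, dM k a b = dM k b a) ->
  sum3 (fun i => s * (dX i i j + dF i * N i j + F * - sum3 (fun p => sum3 (fun q => N i p * dM i p q * N q j))))
  + sum3 (fun i => sum3 (fun k => Gam N dM i i k * (s * (X k j + F * N k j))))
  + sum3 (fun i => sum3 (fun k => Gam N dM j i k * (s * (X i k + F * N i k))))
  = s * (sum3 (fun i => dX i i j) + sum3 (fun i => sum3 (fun k => Gam N dM i i k * X k j))
        + sum3 (fun i => sum3 (fun k => Gam N dM j i k * X i k)) + sum3 (fun i => dF i * N i j)).
Proof.
intros HN HM.
destruct j; cbv [Gam sum3];
rewrite ?(HN I2 I1), ?(HN IZ I1), ?(HN IZ I2),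
 ?(HM I1 I2 I1), ?(HM I1 IZ I1), ?(HM I1 IZ I2),
 ?(HM I2 I2 I1), ?(HM I2 IZ I1), ?(HM I2 IZ I2),
 ?(HM IZ I2 I1), ?(HM IZ IZ I1), ?(HM IZ IZ I2); field.
Qed.

Lemma core1 (w u v p q r : R) (dw du dv dp dq dr : idx -> R) (j : idx) :
  w <> 0 -> p * r - q * q <> 0 -> du IZ = 0 -> dv IZ = 0 ->
  dw IZ = - / 3 * w * (dp IZ * r + p * dr IZ - 2 * q * dq IZ) / (p * r - q * q) ->
  let N := inv3 (Mx w u v p q r) in
  let dM k := dMx w (dw k) u v (du k) (dv k) (dp k) (dq k) (dr k) in
  sum3 (fun i => sum3 (fun k => Gam N dM i i k * dzz k j)) +
  sum3 (fun i => sum3 (fun k => Gam N dM j i k * dzz i k)) +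
  sum3 (fun i => / 2 * dw i * N i j) = 0.
Proof.
intros Hw HD Hu Hv Hdw N dM. subst N dM.
destruct j; cbv [Gam sum3 inv3 cof det3 nxt Mx dMx th th0 gm dzz]; rewrite Hu, Hv, Hdw; field; repeat split; try assumption; try lra;
 match goal with |- ?e <> 0 => replace e with (w*(p*r-q*q)) by ring end;
 apply Rmult_integral_contrapositive_currified; auto.
Qed.

Lemma core2 (f u v p q r : R) (df du dv dp dq dr : idx -> R) (j : idx) :
  p * r - q * q <> 0 -> du IZ = 0 -> dv IZ = 0 ->
  df IZ = - / 2 * f * (dp IZ * r + p * dr IZ - 2 * q * dq IZ) / (p * r - q * q) ->
  let N := inv3 (Mx 1 u v p q r) in
  let dM k := dMx 1 0 u v (du k) (dv k) (dp k) (dq k) (dr k) in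
  sum3 (fun i => df i * dzz i j) +
  sum3 (fun i => sum3 (fun k => Gam N dM i i k * (f * dzz k j))) +
  sum3 (fun i => sum3 (fun k => Gam N dM j i k * (f * dzz i k))) +
  sum3 (fun i => 0 * N i j) = 0.
Proof.
intros HD Hu Hv Hdw N dM. subst N dM.
destruct j; cbv [Gam sum3 inv3 cof det3 nxt Mx dMx th th0 gm dzz]; rewrite Hu, Hv, Hdw; field; repeat split; try assumption; try lra;
 match goal with |- ?e <> 0 => replace e with ((p*r-q*q)) by ring end; auto.
Qed.

Lemma hd_metric_form k (W : Field3) g11 g12 g22 b1 b2 x1 x2 z dW a b :
  hd k W x1 x2 z dW -> ex_pd2 k b1 x1 x2 -> ex_pd2 k b2 x1 x2 ->
  ex_pd k g11 x1 x2 z -> ex_pd k g12 x1 x2 z -> ex_pd k g22 x1 x2 z ->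
  hd k (metric_form W g11 g12 g22 b1 b2 a b) x1 x2 z
    (dMx (W x1 x2 z) dW (b1 x1 x2) (b2 x1 x2) (pd2 k b1 x1 x2) (pd2 k b2 x1 x2)
         (pd k g11 x1 x2 z) (pd k g12 x1 x2 z) (pd k g22 x1 x2 z) a b).
Proof.
unfold hd, metric_form; intros HW H1 H2 H3 H4 H5.
assert (HWe : ex_derive (lin k W x1 x2 z) (crd k x1 x2 z)) by (eexists; eauto).
pose proof (is_derive_unique _ _ _ HW) as HWd.
destruct k, a, b; simpl in *; auto_derive; try solve [repeat split; auto];
 try rewrite HWd; cbv [dMx th th0 gm]; ring.
Qed.

Lemma hd_det2 k g11 g12 g22 x1 x2 z :
  ex_pd k g11 x1 x2 z -> ex_pd k g12 x1 x2 z -> ex_pd k g22 x1 x2 z ->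
  hd k (det2 g11 g12 g22) x1 x2 z
   (pd k g11 x1 x2 z * g22 x1 x2 z + g11 x1 x2 z * pd k g22 x1 x2 z
    - 2 * g12 x1 x2 z * pd k g12 x1 x2 z).
Proof.
unfold hd, det2; intros H3 H4 H5.
destruct k; simpl in *; auto_derive; try solve [repeat split; auto]; ring.
Qed.

Lemma hd_T1 k a b s c (W Ng : Field3) x1 x2 z dW dN :
  hd k W x1 x2 z dW -> hd k Ng x1 x2 z dN ->
  hd k (fun x1 x2 z => s * (dzz a b + (c + / 2 * W x1 x2 z) * Ng x1 x2 z)) x1 x2 z
    (s * (0 + / 2 * dW * Ng x1 x2 z + (c + / 2 * W x1 x2 z) * dN)).
Proof.
unfold hd; intros H1 H2.
assert (E1 : ex_derive (lin k W x1 x2 z) (crd k x1 x2 z)) by (eexists; eauto).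
assert (E2 : ex_derive (lin k Ng x1 x2 z) (crd k x1 x2 z)) by (eexists; eauto).
pose proof (is_derive_unique _ _ _ H1). pose proof (is_derive_unique _ _ _ H2).
destruct k; simpl in *; auto_derive; try solve [repeat split; auto];
 rewrite ?H, ?H0; ring.
Qed.

Lemma hd_T2 k a b s c (Q Ng : Field3) x1 x2 z dQ dN :
  hd k Q x1 x2 z dQ -> hd k Ng x1 x2 z dN ->
  hd k (fun x1 x2 z => s * (Q x1 x2 z * dzz a b + c * Ng x1 x2 z)) x1 x2 z
    (s * (dQ * dzz a b + 0 * Ng x1 x2 z + c * dN)).
Proof.
unfold hd; intros H1 H2.
assert (E1 : ex_derive (lin k Q x1 x2 z) (crd k x1 x2 z)) by (eexists; eauto).
assert (E2 : ex_derive (lin k Ng x1 x2 z) (crd k x1 x2 z)) by (eexists; eauto).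
pose proof (is_derive_unique _ _ _ H1). pose proof (is_derive_unique _ _ _ H2).
destruct k; simpl in *; auto_derive; try solve [repeat split; auto];
 rewrite ?H, ?H0; ring.
Qed.

Lemma inv3_Mx_sym w u v p q r a b : inv3 (Mx w u v p q r) a b = inv3 (Mx w u v p q r) b a.
Proof. unfold inv3; f_equal; destruct a, b; cbv [cof nxt Mx th gm]; ring. Qed.

Lemma dMx_sym w dw u v du dv dp dq dr a b :
  dMx w dw u v du dv dp dq dr a b = dMx w dw u v du dv dp dq dr b a.
Proof. destruct a, b; cbv [dMx th th0 gm]; ring. Qed.

Lemma part1 (U : R -> R -> R -> Prop) (g11 g12 g22 : Field3) (b1 b2 b : Field2) (c s : R)
  (Hg11 : C1_3 U g11) (Hg12 : C1_3 U g12) (Hg22 : C1_3 U g22)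
  (Hb1 : C1_2 (fun x1 x2 => exists z, U x1 x2 z) b1)
  (Hb2 : C1_2 (fun x1 x2 => exists z, U x1 x2 z) b2)
  (Hb : C1_2 (fun x1 x2 => exists z, U x1 x2 z) b)
  (Hsig : forall x1 x2 z, U x1 x2 z -> 0 < g11 x1 x2 z /\ 0 < det2 g11 g12 g22 x1 x2 z)
  (Hbpos : forall x1 x2 z, U x1 x2 z -> 0 < b x1 x2) :
  momentum_constraint U (metric1 b g11 g12 g22 b1 b2) (T1 s c b g11 g12 g22 b1 b2).
Proof.
intros x1 x2 z HU j.
assert (HP : exists z, U x1 x2 z) by eauto.
assert (HDp : 0 < det2 g11 g12 g22 x1 x2 z) by apply (Hsig _ _ _ HU).
assert (HBp : 0 < b x1 x2) by apply (Hbpos _ _ _ HU).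
assert (E11 : forall k, ex_pd k g11 x1 x2 z) by (intro k; apply (Hg11 _ _ _ HU k)).
assert (E12 : forall k, ex_pd k g12 x1 x2 z) by (intro k; apply (Hg12 _ _ _ HU k)).
assert (E22 : forall k, ex_pd k g22 x1 x2 z) by (intro k; apply (Hg22 _ _ _ HU k)).
assert (Eb1 : forall k, ex_pd2 k b1 x1 x2) by (intro k; apply (proj2 (Hb1 _ _ HP) k)).
assert (Eb2 : forall k, ex_pd2 k b2 x1 x2) by (intro k; apply (proj2 (Hb2 _ _ HP) k)).
assert (Eb : forall k, ex_pd2 k b x1 x2) by (intro k; apply (proj2 (Hb _ _ HP) k)).
set (D := det2 g11 g12 g22 x1 x2 z).
set (A := Rpower (sqrt D) (- (2 / 3))).
set (dD := fun k => pd k g11 x1 x2 z * g22 x1 x2 z + g11 x1 x2 z * pd k g22 x1 x2 z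
    - 2 * g12 x1 x2 z * pd k g12 x1 x2 z).
assert (HD : forall k, hd k (det2 g11 g12 g22) x1 x2 z (dD k)) by (intro k; apply hd_det2; auto).
assert (HA : forall k, hd k (fun a b c => Rpower (sqrt (det2 g11 g12 g22 a b c)) (- (2 / 3))) x1 x2 z
   (A * (- / 3) / D * dD k)).
{ intro k. apply (hd_comp k (det2 g11 g12 g22) (fun y => Rpower (sqrt y) (- (2 / 3)))); auto.
  apply der_A; auto. }
set (dw := fun k => pd2 k b x1 x2 * A + b x1 x2 * (A * (- / 3) / D * dD k)).
assert (Hw : forall k, hd k (w1 b g11 g12 g22) x1 x2 z (dw k)).
{ intro k. exact (hd_mult k (fun a c _ => b a c) _ x1 x2 z _ _ (hd_lift k b x1 x2 z (Eb k)) (HA k)). }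
set (W := w1 b g11 g12 g22 x1 x2 z).
assert (HWp : 0 < W).
{ unfold W, w1. apply Rmult_lt_0_compat; auto. unfold Rpower; apply exp_pos. }
set (dM := fun l a b0 => dMx W (dw l) (b1 x1 x2) (b2 x1 x2) (pd2 l b1 x1 x2) (pd2 l b2 x1 x2)
         (pd l g11 x1 x2 z) (pd l g12 x1 x2 z) (pd l g22 x1 x2 z) a b0).
assert (HG : forall l a b0, hd l (metric1 b g11 g12 g22 b1 b2 a b0) x1 x2 z (dM l a b0)).
{ intros l a b0. apply hd_metric_form; auto. }
set (G := metric1 b g11 g12 g22 b1 b2).
assert (HMx : (fun c d => G c d x1 x2 z) = Mx W (b1 x1 x2) (b2 x1 x2) (g11 x1 x2 z) (g12 x1 x2 z) (g22 x1 x2 z)).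
{ apply functional_extensionality; intro a; apply functional_extensionality; intro b0.
  destruct a, b0; reflexivity. }
assert (Hdet : det3 (fun c d => G c d x1 x2 z) <> 0).
{ rewrite HMx, det_Mx. apply Rgt_not_eq. apply Rmult_lt_0_compat; auto. }
set (N := fun a b0 => ginv G a b0 x1 x2 z).
set (dT := fun k a b0 => s * (0 + / 2 * dw k * N a b0 + (c + / 2 * W) *
          - sum3 (fun p => sum3 (fun q => N a p * dM k p q * N q b0)))).
assert (HT : forall k a b0, hd k (T1 s c b g11 g12 g22 b1 b2 a b0) x1 x2 z (dT k a b0)).
{ intros k a b0. apply (hd_T1 k a b0 s c (w1 b g11 g12 g22) (ginv G a b0)); auto.
  apply hd_ginv; auto; intros; apply HG. }
rewrite (divT_eq G _ x1 x2 z dM dT j (fun l a b0 => hd_pd _ _ _ _ _ _ (HG l a b0)) (fun k a b0 => hd_pd _ _ _ _ _ _ (HT k a b0))).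
etransitivity.
{ exact (div_reduce N dM dzz (fun _ _ _ => 0) (c + / 2 * W) (fun k => / 2 * dw k) s j
    (fun a b0 => ltac:(unfold N, ginv; fold G; rewrite HMx; apply inv3_Mx_sym))
    (fun k a b0 => dMx_sym _ _ _ _ _ _ _ _ _ a b0)). }
transitivity (s * 0); [| ring]. f_equal.
unfold N, ginv; fold G; rewrite HMx.
unfold dM.
replace (sum3 (fun i => 0)) with 0 by (cbv; ring).
rewrite Rplus_0_l.
apply (core1 W (b1 x1 x2) (b2 x1 x2) (g11 x1 x2 z) (g12 x1 x2 z) (g22 x1 x2 z)
  dw (fun l => pd2 l b1 x1 x2) (fun l => pd2 l b2 x1 x2)
  (fun l => pd l g11 x1 x2 z) (fun l => pd l g12 x1 x2 z) (fun l => pd l g22 x1 x2 z) j); auto.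
- lra.
- exact (Rgt_not_eq _ _ HDp).
- unfold dw, dD; simpl. unfold W, w1, absg. fold D. fold A.
  change (g11 x1 x2 z * g22 x1 x2 z - g12 x1 x2 z * g12 x1 x2 z) with D. field. exact (Rgt_not_eq _ _ HDp).
Qed.

Lemma part2 (U : R -> R -> R -> Prop) (g11 g12 g22 : Field3) (b1 b2 b : Field2) (c s : R)
  (Hg11 : C1_3 U g11) (Hg12 : C1_3 U g12) (Hg22 : C1_3 U g22)
  (Hb1 : C1_2 (fun x1 x2 => exists z, U x1 x2 z) b1)
  (Hb2 : C1_2 (fun x1 x2 => exists z, U x1 x2 z) b2)
  (Hb : C1_2 (fun x1 x2 => exists z, U x1 x2 z) b)
  (Hsig : forall x1 x2 z, U x1 x2 z -> 0 < g11 x1 x2 z /\ 0 < det2 g11 g12 g22 x1 x2 z) :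
  momentum_constraint U (metric2 g11 g12 g22 b1 b2) (T2 s c b g11 g12 g22 b1 b2).
Proof.
intros x1 x2 z HU j.
assert (HP : exists z, U x1 x2 z) by eauto.
assert (HDp : 0 < det2 g11 g12 g22 x1 x2 z) by apply (Hsig _ _ _ HU).
assert (E11 : forall k, ex_pd k g11 x1 x2 z) by (intro k; apply (Hg11 _ _ _ HU k)).
assert (E12 : forall k, ex_pd k g12 x1 x2 z) by (intro k; apply (Hg12 _ _ _ HU k)).
assert (E22 : forall k, ex_pd k g22 x1 x2 z) by (intro k; apply (Hg22 _ _ _ HU k)).
assert (Eb1 : forall k, ex_pd2 k b1 x1 x2) by (intro k; apply (proj2 (Hb1 _ _ HP) k)).
assert (Eb2 : forall k, ex_pd2 k b2 x1 x2) by (intro k; apply (proj2 (Hb2 _ _ HP) k)).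
assert (Eb : forall k, ex_pd2 k b x1 x2) by (intro k; apply (proj2 (Hb _ _ HP) k)).
set (D := det2 g11 g12 g22 x1 x2 z).
assert (HsD : 0 < sqrt D) by (apply sqrt_lt_R0; exact HDp).
set (dD := fun k => pd k g11 x1 x2 z * g22 x1 x2 z + g11 x1 x2 z * pd k g22 x1 x2 z
    - 2 * g12 x1 x2 z * pd k g12 x1 x2 z).
assert (HD : forall k, hd k (det2 g11 g12 g22) x1 x2 z (dD k)) by (intro k; apply hd_det2; auto).
assert (HA : forall k, hd k (fun a b c => / sqrt (det2 g11 g12 g22 a b c)) x1 x2 z
   (- / 2 * / sqrt D / D * dD k)).
{ intro k. apply (hd_comp k (det2 g11 g12 g22) (fun y => / sqrt y)); auto.
  apply der_isq; auto. }
set (dQ := fun k => pd2 k b x1 x2 * / sqrt D + b x1 x2 * (- / 2 * / sqrt D / D * dD k)).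
assert (HQ : forall k, hd k (fun x1 x2 z => b x1 x2 / absg g11 g12 g22 x1 x2 z) x1 x2 z (dQ k)).
{ intro k. exact (hd_mult k (fun a c _ => b a c) _ x1 x2 z _ _ (hd_lift k b x1 x2 z (Eb k)) (HA k)). }
set (dM := fun l a b0 => dMx 1 0 (b1 x1 x2) (b2 x1 x2) (pd2 l b1 x1 x2) (pd2 l b2 x1 x2)
         (pd l g11 x1 x2 z) (pd l g12 x1 x2 z) (pd l g22 x1 x2 z) a b0).
assert (HG : forall l a b0, hd l (metric2 g11 g12 g22 b1 b2 a b0) x1 x2 z (dM l a b0)).
{ intros l a b0. apply hd_metric_form; auto. apply hd_const. }
set (G := metric2 g11 g12 g22 b1 b2).
assert (HMx : (fun c d => G c d x1 x2 z) = Mx 1 (b1 x1 x2) (b2 x1 x2) (g11 x1 x2 z) (g12 x1 x2 z) (g22 x1 x2 z)).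
{ apply functional_extensionality; intro a; apply functional_extensionality; intro b0.
  destruct a, b0; reflexivity. }
assert (Hdet : det3 (fun c d => G c d x1 x2 z) <> 0).
{ rewrite HMx, det_Mx. rewrite Rmult_1_l. exact (Rgt_not_eq _ _ HDp). }
set (N := fun a b0 => ginv G a b0 x1 x2 z).
set (f := b x1 x2 / absg g11 g12 g22 x1 x2 z).
set (dT := fun k a b0 => s * (dQ k * dzz a b0 + 0 * N a b0 + c *
          - sum3 (fun p => sum3 (fun q => N a p * dM k p q * N q b0)))).
assert (HT : forall k a b0, hd k (T2 s c b g11 g12 g22 b1 b2 a b0) x1 x2 z (dT k a b0)).
{ intros k a b0. apply (hd_T2 k a b0 s c (fun x1 x2 z => b x1 x2 / absg g11 g12 g22 x1 x2 z) (ginv G a b0)); auto.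
  apply hd_ginv; auto; intros; apply HG. }
rewrite (divT_eq G _ x1 x2 z dM dT j (fun l a b0 => hd_pd _ _ _ _ _ _ (HG l a b0)) (fun k a b0 => hd_pd _ _ _ _ _ _ (HT k a b0))).
etransitivity.
{ exact (div_reduce N dM (fun a b0 => f * dzz a b0) (fun k a b0 => dQ k * dzz a b0) c (fun _ => 0) s j
    (fun a b0 => ltac:(unfold N, ginv; fold G; rewrite HMx; apply inv3_Mx_sym))
    (fun k a b0 => dMx_sym _ _ _ _ _ _ _ _ _ a b0)). }
transitivity (s * 0); [| ring]. f_equal.
unfold N, ginv; fold G; rewrite HMx.
unfold dM.
apply (core2 f (b1 x1 x2) (b2 x1 x2) (g11 x1 x2 z) (g12 x1 x2 z) (g22 x1 x2 z)
  dQ (fun l => pd2 l b1 x1 x2) (fun l => pd2 l b2 x1 x2)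
  (fun l => pd l g11 x1 x2 z) (fun l => pd l g12 x1 x2 z) (fun l => pd l g22 x1 x2 z) j); auto.
- exact (Rgt_not_eq _ _ HDp).
- unfold dQ, dD, f, absg; simpl. fold D.
  change (g11 x1 x2 z * g22 x1 x2 z - g12 x1 x2 z * g12 x1 x2 z) with D. field.
  repeat split; apply Rgt_not_eq; assumption.
Qed.

Lemma c2_iff (F : R -> R -> R) t y :
  continuous (fun q : R * R => F (fst q) (snd q)) (t, y) <-> continuity_2d_pt F t y.
Proof. symmetry. apply continuity_2d_pt_filterlim. Qed.

Lemma slice1 (F : R -> R -> R) t y : continuity_2d_pt F t y -> continuous (fun s => F s y) t.
Proof.
intros H. apply c2_iff in H.
apply (continuous_comp_2 (fun s : R => s) (fun _ : R => y) F t); auto.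
apply continuous_id. apply continuous_const.
Qed.

Lemma slice2 (F : R -> R -> R) t y : continuity_2d_pt F t y -> continuous (fun s => F t s) y.
Proof.
intros H. apply c2_iff in H.
apply (continuous_comp_2 (fun _ : R => t) (fun s : R => s) F y); auto.
apply continuous_const. apply continuous_id.
Qed.

Lemma c2_swap (F : R -> R -> R) t y : continuity_2d_pt F t y -> continuity_2d_pt (fun u v => F v u) y t.
Proof.
intros H eps. destruct (H eps) as [d Hd]. exists d. intros u v Hu Hv. apply Hd; auto.
Qed.

Lemma RInt_bound (f : R -> R) a b M : ex_RInt f a b ->
  (forall t, Rmin a b <= t <= Rmax a b -> Rabs (f t) <= M) ->
  Rabs (RInt f a b) <= Rabs (b - a) * M.
Proof.
intros He Hb. destruct (Rle_dec a b) as [Hab|Hab].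
- rewrite (Rabs_right (b - a)) by lra. apply abs_RInt_le_const; auto.
  intros t Ht; apply Hb; rewrite Rmin_left, Rmax_right; lra.
- rewrite <- (opp_RInt_swap f b a) by (apply ex_RInt_swap; auto).
  change (Rabs (- RInt f b a) <= Rabs (b - a) * M). rewrite Rabs_Ropp. rewrite (Rabs_left (b - a)) by lra.
  replace (- (b - a)) with (a - b) by ring.
  apply abs_RInt_le_const; [lra| apply ex_RInt_swap; auto|].
  intros t Ht; apply Hb; rewrite Rmin_right, Rmax_left; lra.
Qed.

Lemma abs_le_iff x r : Rabs x <= r <-> - r <= x <= r.
Proof. unfold Rabs; destruct Rcase_abs; split; intros; lra. Qed.
Lemma abs_lt_iff x r : Rabs x < r <-> - r < x < r.
Proof. unfold Rabs; destruct Rcase_abs; split; intros; lra. Qed.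

Lemma seg_in a d p q z : Rabs (p - a) <= d -> Rabs (q - a) <= d ->
  Rmin p q <= z <= Rmax p q -> Rabs (z - a) <= d.
Proof.
rewrite !abs_le_iff. intros Hp Hq Hz.
destruct (Rle_dec p q); [rewrite Rmin_left, Rmax_right in Hz by lra | rewrite Rmin_right, Rmax_left in Hz by lra]; split; lra.
Qed.

Lemma exRI (F : R -> R -> R) a c d v p q :
  (forall t y, Rabs (t - a) <= d -> Rabs (y - c) <= d -> continuity_2d_pt F t y) ->
  Rabs (v - c) <= d -> Rabs (p - a) <= d -> Rabs (q - a) <= d ->
  ex_RInt (fun t => F t v) p q.
Proof.
intros HF Hv Hp Hq. apply (ex_RInt_continuous (V:=R_CompleteNormedModule)). intros z Hz.
apply slice1. apply HF; auto. apply (seg_in a d p q z); auto.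
Qed.

Lemma cont_param (F : R -> R -> R) a c d : 0 < d ->
  (forall t y, Rabs (t - a) <= d -> Rabs (y - c) <= d -> continuity_2d_pt F t y) ->
  forall x1 x2, Rabs (x1 - a) < d -> Rabs (x2 - c) < d ->
  continuity_2d_pt (fun u v => RInt (fun t => F t v) a u) x1 x2.
Proof.
intros Hd HF x1 x2 H1 H2 eps.
set (M0 := Rabs (F x1 x2)).
assert (He' : 0 < eps / (2 * (d + 1))) by (apply Rdiv_lt_0_compat; [apply cond_pos| lra]).
set (eps' := mkposreal _ He').
assert (Hunif : forall x, a - d <= x <= a + d -> continuity_2d_pt F x x2).
{ intros x Hx. apply HF; [apply abs_le_iff; split; lra| lra]. }
destruct (uniform_continuity_2d_1d F (a - d) (a + d) x2 Hunif eps') as [d1 Hu].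
assert (Hm1 : 0 < d - Rabs (x1 - a)) by lra.
assert (Hm2 : 0 < d - Rabs (x2 - c)) by lra.
assert (HM : 0 < eps / (2 * (M0 + eps' + 1))).
{ apply Rdiv_lt_0_compat; [apply cond_pos|]. unfold M0. pose proof (Rabs_pos (F x1 x2)).
  simpl. lra. }
set (del := Rmin (Rmin d1 (d - Rabs (x1 - a))) (Rmin (d - Rabs (x2 - c)) (eps / (2 * (M0 + eps' + 1))))).
assert (Hdel : 0 < del).
{ unfold del. apply Rmin_pos; apply Rmin_pos; auto. apply cond_pos. }
exists (mkposreal del Hdel). simpl. intros u v Hu1 Hv1.
assert (Hdd1 : del <= d1) by (unfold del; eapply Rle_trans; [apply Rmin_l| apply Rmin_l]).
assert (Hdd2 : del <= d - Rabs (x1 - a)) by (unfold del; eapply Rle_trans; [apply Rmin_l| apply Rmin_r]).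
assert (Hdd3 : del <= d - Rabs (x2 - c)) by (unfold del; eapply Rle_trans; [apply Rmin_r| apply Rmin_l]).
assert (Hdd4 : del <= eps / (2 * (M0 + eps' + 1))) by (unfold del; eapply Rle_trans; [apply Rmin_r| apply Rmin_r]).
assert (Hua : Rabs (u - a) <= d).
{ replace (u - a) with ((u - x1) + (x1 - a)) by ring.
  eapply Rle_trans; [apply Rabs_triang|]. lra. }
assert (Hvc : Rabs (v - c) <= d).
{ replace (v - c) with ((v - x2) + (x2 - c)) by ring.
  eapply Rle_trans; [apply Rabs_triang|]. lra. }
assert (Hx1a : Rabs (x1 - a) <= d) by lra.
assert (Hx2c : Rabs (x2 - c) <= d) by lra.
assert (Haa : Rabs (a - a) <= d) by (rewrite Rminus_diag, Rabs_R0; lra).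
assert (E1 := exRI F a c d v a x1 HF Hvc Haa Hx1a).
assert (E2 := exRI F a c d v x1 u HF Hvc Hx1a Hua).
assert (E3 := exRI F a c d x2 a x1 HF Hx2c Haa Hx1a).
rewrite <- (RInt_Chasles (fun t => F t v) a x1 u E1 E2).
change (Rabs (RInt (fun t => F t v) a x1 + RInt (fun t => F t v) x1 u - RInt (fun t => F t x2) a x1) < eps).
replace (RInt (fun t => F t v) a x1 + RInt (fun t => F t v) x1 u - RInt (fun t => F t x2) a x1)
  with (RInt (fun t => F t v) x1 u + (RInt (fun t => F t v) a x1 - RInt (fun t => F t x2) a x1)) by ring.
assert (EM : RInt (fun t => F t v) a x1 - RInt (fun t => F t x2) a x1 = RInt (fun t => F t v - F t x2) a x1).
{ symmetry. exact (RInt_minus (V:=R_CompleteNormedModule) (fun t => F t v) (fun t => F t x2) a x1 E1 E3). }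
rewrite EM.
eapply Rle_lt_trans; [apply Rabs_triang|].
assert (B1 : Rabs (RInt (fun t => F t v) x1 u) <= Rabs (u - x1) * (M0 + eps')).
{ apply RInt_bound; auto. intros t Ht.
  assert (Hta : a - d <= t <= a + d).
  { assert (Hq : Rabs (t - a) <= d) by (apply (seg_in a d x1 u t); auto).
    apply abs_le_iff in Hq. split; lra. }
  assert (Htx : Rabs (t - x1) < d1).
  { apply Rle_lt_trans with (Rabs (u - x1)); [|lra].
    rewrite !abs_le_iff in *. destruct (Rle_dec x1 u);
    [rewrite Rmin_left, Rmax_right in Ht by lra | rewrite Rmin_right, Rmax_left in Ht by lra];
    unfold Rabs; repeat destruct Rcase_abs; lra. }
  assert (Hx1r : a - d <= x1 <= a + d) by (apply abs_le_iff in Hx1a; split; lra).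
  specialize (Hu x1 x2 t v Hx1r ltac:(pose proof (cond_pos d1); split; lra) Hta ltac:(rewrite abs_lt_iff in Hv1; split; lra) Htx).
  unfold M0. replace (F t v) with ((F t v - F x1 x2) + F x1 x2) by ring.
  eapply Rle_trans; [apply Rabs_triang|]. lra. }
assert (B2 : Rabs (RInt (fun t => F t v - F t x2) a x1) <= Rabs (x1 - a) * eps').
{ apply RInt_bound.
  - exact (ex_RInt_minus (V:=R_NormedModule) _ _ _ _ E1 E3).
  - intros t Ht.
    assert (Hta : a - d <= t <= a + d).
    { assert (Hq : Rabs (t - a) <= d) by (apply (seg_in a d a x1 t); auto).
      apply abs_le_iff in Hq. split; lra. }
    specialize (Hu t x2 t v Hta ltac:(pose proof (cond_pos d1); split; lra) Hta ltac:(rewrite abs_lt_iff in Hv1; split; lra)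
      ltac:(rewrite Rminus_diag, Rabs_R0; apply cond_pos)).
    lra. }
assert (B3 : Rabs (u - x1) * (M0 + eps') < eps / 2).
{ assert (0 <= M0) by apply Rabs_pos. assert (0 < eps') by apply cond_pos.
  apply Rle_lt_trans with (del * (M0 + eps')).
  - apply Rmult_le_compat_r; lra.
  - apply Rle_lt_trans with (eps / (2 * (M0 + eps' + 1)) * (M0 + eps')).
    + apply Rmult_le_compat_r; lra.
    + pose proof (cond_pos eps). apply Rmult_lt_reg_r with (2 * (M0 + eps' + 1)); [lra|].
      field_simplify; [|lra]. nra. }
assert (B4 : Rabs (x1 - a) * eps' < eps / 2).
{ simpl. pose proof (cond_pos eps). pose proof (Rabs_pos (x1 - a)).
  apply Rle_lt_trans with (d * (eps / (2 * (d + 1)))).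
  - apply Rmult_le_compat_r; lra.
  - apply Rmult_lt_reg_r with (2 * (d + 1)); [lra|]. field_simplify; lra. }
lra.
Qed.

Lemma loc_R (x r : R) (P : R -> Prop) : 0 < r -> (forall y, Rabs (y - x) < r -> P y) -> locally x P.
Proof. intros Hr H. exists (mkposreal r Hr). intros y Hy. apply H. exact Hy. Qed.

Lemma sq_open a c d : open2 (fun x1 x2 => Rabs (x1 - a) < d /\ Rabs (x2 - c) < d).
Proof.
unfold open2. intros [x y] [H1 H2]. simpl in *.
assert (Hr : 0 < Rmin (d - Rabs (x - a)) (d - Rabs (y - c))) by (apply Rmin_pos; lra).
exists (mkposreal _ Hr). intros [u v] [Hu Hv]. simpl in *.
change (Rabs (u - x) < Rmin (d - Rabs (x - a)) (d - Rabs (y - c))) in Hu.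
change (Rabs (v - y) < Rmin (d - Rabs (x - a)) (d - Rabs (y - c))) in Hv.
pose proof (Rmin_l (d - Rabs (x - a)) (d - Rabs (y - c))).
pose proof (Rmin_r (d - Rabs (x - a)) (d - Rabs (y - c))).
split.
- replace (u - a) with ((u - x) + (x - a)) by ring. eapply Rle_lt_trans; [apply Rabs_triang|]. lra.
- replace (v - c) with ((v - y) + (y - c)) by ring. eapply Rle_lt_trans; [apply Rabs_triang|]. lra.
Qed.

Section Constr.
Variables (K : Field2) (a c d : R).
Hypothesis Hd : 0 < d.
Hypothesis HK : forall t y, Rabs (t - a) <= d -> Rabs (y - c) <= d ->
  continuity_2d_pt K t y /\ continuity_2d_pt (pd2 I2 K) t y /\ ex_pd2 I2 K t y /\ 0 < K t y.

Definition Vsq x1 x2 := Rabs (x1 - a) < d /\ Rabs (x2 - c) < d.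
Definition ph1 x1 x2 := RInt (fun t => K t x2) a x1.
Definition ph2 (x1 x2 : R) := x2.

Lemma HKc t y : Rabs (t - a) <= d -> Rabs (y - c) <= d -> continuity_2d_pt K t y.
Proof. intros; apply HK; auto. Qed.
Lemma HKdc t y : Rabs (t - a) <= d -> Rabs (y - c) <= d -> continuity_2d_pt (pd2 I2 K) t y.
Proof. intros; apply HK; auto. Qed.

Lemma der1 x1 x2 : Vsq x1 x2 -> is_derive (fun t => ph1 t x2) x1 (K x1 x2).
Proof.
intros [H1 H2]. unfold ph1.
apply (is_derive_RInt (fun t => K t x2) (fun b => RInt (fun t => K t x2) a b) a x1).
- apply (loc_R x1 (d - Rabs (x1 - a))); [lra|]. intros y Hy.
  apply (RInt_correct (V:=R_CompleteNormedModule)).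
  apply (exRI K a c d x2 a y HKc); try lra.
  + rewrite Rminus_diag, Rabs_R0; lra.
  + replace (y - a) with ((y - x1) + (x1 - a)) by ring. eapply Rle_trans; [apply Rabs_triang|]. lra.
- apply slice1. apply HKc; lra.
Qed.

Lemma der2 x1 x2 : Vsq x1 x2 ->
  is_derive (fun s => ph1 x1 s) x2 (RInt (fun t => pd2 I2 K t x2) a x1).
Proof.
intros [H1 H2]. unfold ph1.
assert (Hseg : forall t, Rmin a x1 <= t <= Rmax a x1 -> Rabs (t - a) <= d).
{ intros t Ht. apply (seg_in a d a x1 t); auto; try lra. rewrite Rminus_diag, Rabs_R0; lra. }
apply (is_derive_RInt_param (fun u t => K t u) a x1 x2).
- apply (loc_R x2 (d - Rabs (x2 - c))); [lra|]. intros y Hy t Ht.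
  apply HK; auto.
  replace (y - c) with ((y - x2) + (x2 - c)) by ring. eapply Rle_trans; [apply Rabs_triang|]. lra.
- intros t Ht. apply (c2_swap (pd2 I2 K)). apply HKdc; auto; lra.
- apply (loc_R x2 (d - Rabs (x2 - c))); [lra|]. intros y Hy.
  apply (exRI K a c d y a x1 HKc); try lra.
  + replace (y - c) with ((y - x2) + (x2 - c)) by ring. eapply Rle_trans; [apply Rabs_triang|]. lra.
  + rewrite Rminus_diag, Rabs_R0; lra.
Qed.


Lemma pd1_ph1 x1 x2 : Vsq x1 x2 -> pd2 I1 ph1 x1 x2 = K x1 x2.
Proof. intros H. apply is_derive_unique. apply der1; auto. Qed.

Lemma pd2_ph1 x1 x2 : Vsq x1 x2 -> pd2 I2 ph1 x1 x2 = RInt (fun t => pd2 I2 K t x2) a x1.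
Proof. intros H. apply is_derive_unique. apply der2; auto. Qed.

Lemma locV x1 x2 : Vsq x1 x2 -> locally (x1, x2) (fun q : R * R => Vsq (fst q) (snd q)).
Proof. intros H. apply (sq_open a c d (x1, x2)). exact H. Qed.

Lemma pd2_ph2_1 x1 x2 : pd2 I1 ph2 x1 x2 = 0.
Proof. simpl. unfold ph2. apply Derive_const. Qed.
Lemma pd2_ph2_2 x1 x2 : pd2 I2 ph2 x1 x2 = 1.
Proof. simpl. unfold ph2. apply Derive_id. Qed.

Lemma C1_ph1 : C1_2 Vsq ph1.
Proof.
intros x1 x2 HV. pose proof HV as [H1 H2].
split.
{ apply c2_iff. apply (cont_param K a c d Hd HKc); auto. }
intro i; destruct i; split.
- eexists; apply der1; auto.
- apply (continuous_ext_loc _ (fun q : R * R => K (fst q) (snd q))).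
  + generalize (locV x1 x2 HV). apply filter_imp. intros q Hq. simpl. symmetry. apply pd1_ph1; auto.
  + apply c2_iff. apply HKc; lra.
- eexists; apply der2; auto.
- apply (continuous_ext_loc _ (fun q : R * R => RInt (fun t => pd2 I2 K t (snd q)) a (fst q))).
  + generalize (locV x1 x2 HV). apply filter_imp. intros q Hq. symmetry. apply pd2_ph1; auto.
  + apply (c2_iff (fun u v => RInt (fun t => pd2 I2 K t v) a u)).
    apply (cont_param (pd2 I2 K) a c d Hd HKdc); auto.
- simpl; auto.
- simpl. apply continuous_const.
Qed.

Lemma C1_ph2 : C1_2 Vsq ph2.
Proof.
intros x1 x2 HV. split.
{ unfold ph2. apply continuous_snd. }
intro i; destruct i; split.
- simpl. unfold ph2. apply ex_derive_const.
- apply (continuous_ext (fun _ => 0)). { intros q; symmetry; apply pd2_ph2_1. } apply continuous_const.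
- simpl. unfold ph2. apply ex_derive_id.
- apply (continuous_ext (fun _ => 1)). { intros q; symmetry; apply pd2_ph2_2. } apply continuous_const.
- simpl; auto.
- simpl. apply continuous_const.
Qed.

Lemma ph1_strict x2 x1 y1 : Vsq x1 x2 -> Vsq y1 x2 -> x1 < y1 -> ph1 x1 x2 < ph1 y1 x2.
Proof.
intros [H1 H2] [H3 H4] Hlt. unfold ph1.
assert (Haa : Rabs (a - a) <= d) by (rewrite Rminus_diag, Rabs_R0; lra).
assert (E1 := exRI K a c d x2 a x1 HKc ltac:(lra) Haa ltac:(lra)).
assert (E2 := exRI K a c d x2 x1 y1 HKc ltac:(lra) ltac:(lra) ltac:(lra)).
rewrite <- (RInt_Chasles (V:=R_CompleteNormedModule) (fun t => K t x2) a x1 y1 E1 E2).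
change (RInt (fun t => K t x2) a x1 < RInt (fun t => K t x2) a x1 + RInt (fun t => K t x2) x1 y1).
assert (0 < RInt (fun t => K t x2) x1 y1); [|lra].
assert (Hseg : forall t, x1 <= t <= y1 -> Rabs (t - a) <= d).
{ intros t Ht. apply (seg_in a d x1 y1 t); try lra. rewrite Rmin_left, Rmax_right; lra. }
apply RInt_gt_0; auto.
- intros t Ht. apply HK; [apply Hseg; lra| lra].
- intros t Ht. apply slice1. apply HKc; [apply Hseg; lra| lra].
Qed.

Lemma cc : coord_change Vsq ph1 ph2.
Proof.
split; [apply C1_ph1|]. split; [apply C1_ph2|]. split.
- intros x1 x2 y1 y2 Hx Hy E1 E2. unfold ph2 in E2. subst y2.
  split; auto.
  destruct (Rtotal_order x1 y1) as [Hl|[He|Hg]]; auto.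
  + pose proof (ph1_strict x2 x1 y1 Hx Hy Hl). lra.
  + pose proof (ph1_strict x2 y1 x1 Hy Hx Hg). lra.
- intros x1 x2 Hx. rewrite pd1_ph1, pd2_ph2_1, pd2_ph2_2 by auto.
  destruct Hx as [H1 H2]. destruct (HK x1 x2 ltac:(lra) ltac:(lra)) as [_ [_ [_ Hp]]].
  intro Hc. ring_simplify in Hc. lra.
Qed.

End Constr.

Definition jm (K m : R) (k i : idx) : R :=
  match k, i with I1, I1 => K | I1, I2 => m | I2, I2 => 1 | IZ, IZ => 1 | _, _ => 0 end.

Lemma algA w u v p q r K m i j : K <> 0 ->
  Mx w u v p q r i j = sum3 (fun k => sum3 (fun l => jm K m k i * jm K m l j *
     Mx w (u / K) (v - m * u / K) (p / (K*K)) ((q - m * p / K) / K) (m*m*p/(K*K) - 2*m*q/K + r) k l)).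
Proof. intros HK; destruct i, j; cbv [sum3 jm Mx th gm]; field; auto. Qed.

Lemma hdet p q r K m : K <> 0 ->
  p / (K * K) * (m * m * p / (K * K) - 2 * m * q / K + r) -
     (q - m * p / K) / K * ((q - m * p / K) / K) = (p*r-q*q)/(K*K).
Proof. intros; field; auto. Qed.

Lemma algB w u v p q r K m k l : K <> 0 -> w <> 0 -> p * r - q * q <> 0 ->
  inv3 (Mx w (u / K) (v - m * u / K) (p / (K*K)) ((q - m * p / K) / K) (m*m*p/(K*K) - 2*m*q/K + r)) k l
  = sum3 (fun i => sum3 (fun j => jm K m k i * jm K m l j * inv3 (Mx w u v p q r) i j)).
Proof.
intros HK Hw HD. unfold inv3. rewrite !det_Mx. rewrite hdet by auto.
destruct k, l; cbv [sum3 jm Mx th gm cof nxt]; field; repeat split; auto.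
Qed.

Lemma jac_jm phi1 phi2 x1 x2 k i :
  pd2 I1 phi2 x1 x2 = 0 -> pd2 I2 phi2 x1 x2 = 1 ->
  jac phi1 phi2 k i x1 x2 = jm (pd2 I1 phi1 x1 x2) (pd2 I2 phi1 x1 x2) k i.
Proof. intros H1 H2; destruct k, i; simpl; auto. Qed.

Lemma dzz_trans K m k l :
  sum3 (fun i => sum3 (fun j => jm K m k i * jm K m l j * dzz i j)) = dzz k l.
Proof. destruct k, l; cbv [sum3 jm dzz]; ring. Qed.

Lemma sqrt_divK D K : 0 < D -> 0 < K -> sqrt (D / (K * K)) = sqrt D / K.
Proof.
intros HD HK. rewrite sqrt_div_alt by nra. rewrite sqrt_square by lra. reflexivity.
Qed.

Lemma sum_ext2 (f g : idx -> idx -> R) : (forall k l, f k l = g k l) ->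
  sum3 (fun k => sum3 (fun l => f k l)) = sum3 (fun k => sum3 (fun l => g k l)).
Proof. intros H; cbv [sum3]; rewrite !H; reflexivity. Qed.

Lemma ln_sqrt' B : 0 < B -> ln (sqrt B) = ln B / 2.
Proof.
intros HB. pose proof (sqrt_lt_R0 _ HB).
assert (E : ln B = ln (sqrt B * sqrt B)) by (rewrite sqrt_sqrt by lra; reflexivity).
rewrite E, ln_mult by lra. field.
Qed.

Lemma Rpow_fact D B : 0 < D -> 0 < B ->
  Rpower (sqrt D / (B * sqrt B)) (- (2 / 3)) = B * Rpower (sqrt D) (- (2 / 3)).
Proof.
intros HD HB. pose proof (sqrt_lt_R0 _ HD). pose proof (sqrt_lt_R0 _ HB).
unfold Rpower. rewrite ln_div by nra. rewrite ln_mult by lra. rewrite (ln_sqrt' B) by lra.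
replace (- (2 / 3) * (ln (sqrt D) - (ln B + ln B / 2))) with (ln B + - (2 / 3) * ln (sqrt D)) by field.
rewrite exp_plus, exp_ln by lra. reflexivity.
Qed.

Section Trans.
Variables (U : R -> R -> R -> Prop) (g11 g12 g22 : Field3) (b1 b2 b : Field2) (c s : R)
  (V : R -> R -> Prop) (phi1 phi2 K : Field2) (psi : R -> R -> R * R).
Hypothesis Hsig : forall x1 x2 z, U x1 x2 z -> 0 < g11 x1 x2 z /\ 0 < det2 g11 g12 g22 x1 x2 z.
Hypothesis Hpsi : forall x1 x2, V x1 x2 -> psi (phi1 x1 x2) (phi2 x1 x2) = (x1, x2).
Hypothesis HJ1 : forall x1 x2, V x1 x2 -> pd2 I1 phi1 x1 x2 = K x1 x2.
Hypothesis HJ2 : forall x1 x2, pd2 I1 phi2 x1 x2 = 0 /\ pd2 I2 phi2 x1 x2 = 1.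
Hypothesis HKp : forall x1 x2, V x1 x2 -> 0 < K x1 x2.

Definition Kp y1 y2 := K (fst (psi y1 y2)) (snd (psi y1 y2)).
Definition mp y1 y2 := pd2 I2 phi1 (fst (psi y1 y2)) (snd (psi y1 y2)).
Definition gp (g : Field3) y1 y2 z := g (fst (psi y1 y2)) (snd (psi y1 y2)) z.
Definition bp (f : Field2) y1 y2 := f (fst (psi y1 y2)) (snd (psi y1 y2)).
Definition hh11 y1 y2 z := gp g11 y1 y2 z / (Kp y1 y2 * Kp y1 y2).
Definition hh12 y1 y2 z := (gp g12 y1 y2 z - mp y1 y2 * gp g11 y1 y2 z / Kp y1 y2) / Kp y1 y2.
Definition hh22 y1 y2 z := mp y1 y2 * mp y1 y2 * gp g11 y1 y2 z / (Kp y1 y2 * Kp y1 y2)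
   - 2 * mp y1 y2 * gp g12 y1 y2 z / Kp y1 y2 + gp g22 y1 y2 z.
Definition ee1 y1 y2 := bp b1 y1 y2 / Kp y1 y2.
Definition ee2 y1 y2 := bp b2 y1 y2 - mp y1 y2 * bp b1 y1 y2 / Kp y1 y2.

Section Pt.
Variables (x1 x2 z : R).
Hypothesis HV : V x1 x2.
Hypothesis HU : U x1 x2 z.
Let y1 := phi1 x1 x2.
Let y2 := phi2 x1 x2.
Let Kx := K x1 x2.
Let m := pd2 I2 phi1 x1 x2.

Lemma vals :
  hh11 y1 y2 z = g11 x1 x2 z / (Kx * Kx) /\
  hh12 y1 y2 z = (g12 x1 x2 z - m * g11 x1 x2 z / Kx) / Kx /\
  hh22 y1 y2 z = m * m * g11 x1 x2 z / (Kx * Kx) - 2 * m * g12 x1 x2 z / Kx + g22 x1 x2 z /\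
  ee1 y1 y2 = b1 x1 x2 / Kx /\ ee2 y1 y2 = b2 x1 x2 - m * b1 x1 x2 / Kx.
Proof.
unfold hh11, hh12, hh22, ee1, ee2, Kp, mp, gp, bp, y1, y2. rewrite Hpsi by auto. simpl.
repeat split; reflexivity.
Qed.

Lemma det2_new : det2 hh11 hh12 hh22 y1 y2 z = det2 g11 g12 g22 x1 x2 z / (Kx * Kx).
Proof.
destruct vals as [H1 [H2 [H3 _]]]. unfold det2. rewrite H1, H2, H3.
apply hdet. pose proof (HKp _ _ HV). unfold Kx. lra.
Qed.

Lemma absg_new : absg hh11 hh12 hh22 y1 y2 z = absg g11 g12 g22 x1 x2 z / Kx.
Proof.
unfold absg. rewrite det2_new. apply sqrt_divK. apply Hsig; auto. apply HKp; auto.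
Qed.

Lemma G_new (W : Field3) :
  (fun k l => metric_form W hh11 hh12 hh22 ee1 ee2 k l y1 y2 z) =
  Mx (W y1 y2 z) (b1 x1 x2 / Kx) (b2 x1 x2 - m * b1 x1 x2 / Kx)
     (g11 x1 x2 z / (Kx * Kx)) ((g12 x1 x2 z - m * g11 x1 x2 z / Kx) / Kx)
     (m * m * g11 x1 x2 z / (Kx * Kx) - 2 * m * g12 x1 x2 z / Kx + g22 x1 x2 z).
Proof.
destruct vals as [H1 [H2 [H3 [H4 H5]]]].
apply functional_extensionality; intro k; apply functional_extensionality; intro l.
destruct k, l; cbv [metric_form theta gab Mx th gm]; rewrite ?H1, ?H2, ?H3, ?H4, ?H5; reflexivity.
Qed.

Lemma G_old (W : Field3) :
  (fun k l => metric_form W g11 g12 g22 b1 b2 k l x1 x2 z) =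
  Mx (W x1 x2 z) (b1 x1 x2) (b2 x1 x2) (g11 x1 x2 z) (g12 x1 x2 z) (g22 x1 x2 z).
Proof.
apply functional_extensionality; intro k; apply functional_extensionality; intro l.
destruct k, l; reflexivity.
Qed.

Lemma jac_x k i : jac phi1 phi2 k i x1 x2 = jm Kx m k i.
Proof. rewrite jac_jm by apply HJ2. unfold Kx, m. rewrite HJ1 by auto. reflexivity. Qed.

Lemma G_trans (W W' : Field3) : W' y1 y2 z = W x1 x2 z ->
  forall i j, metric_form W g11 g12 g22 b1 b2 i j x1 x2 z =
   sum3 (fun k => sum3 (fun l => jac phi1 phi2 k i x1 x2 * jac phi1 phi2 l j x1 x2
       * metric_form W' hh11 hh12 hh22 ee1 ee2 k l y1 y2 z)).
Proof.
intros HW i j.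
rewrite (sum_ext2 _ (fun k l => jm Kx m k i * jm Kx m l j *
   Mx (W' y1 y2 z) (b1 x1 x2 / Kx) (b2 x1 x2 - m * b1 x1 x2 / Kx)
     (g11 x1 x2 z / (Kx * Kx)) ((g12 x1 x2 z - m * g11 x1 x2 z / Kx) / Kx)
     (m * m * g11 x1 x2 z / (Kx * Kx) - 2 * m * g12 x1 x2 z / Kx + g22 x1 x2 z) k l)).
2:{ intros k l. rewrite !jac_x. rewrite <- (G_new W'). reflexivity. }
rewrite HW. change (metric_form W g11 g12 g22 b1 b2 i j x1 x2 z) with
  ((fun k l => metric_form W g11 g12 g22 b1 b2 k l x1 x2 z) i j).
rewrite G_old. apply algA. pose proof (HKp _ _ HV). unfold Kx. lra.
Qed.

Lemma ginv_trans (W W' : Field3) : W' y1 y2 z = W x1 x2 z -> W x1 x2 z <> 0 ->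
  forall k l, ginv (metric_form W' hh11 hh12 hh22 ee1 ee2) k l y1 y2 z =
  sum3 (fun i => sum3 (fun j => jm Kx m k i * jm Kx m l j *
     ginv (metric_form W g11 g12 g22 b1 b2) i j x1 x2 z)).
Proof.
intros HW HW0 k l. unfold ginv. rewrite G_new, G_old, HW.
apply algB; auto.
- pose proof (HKp _ _ HV). unfold Kx. lra.
- pose proof (Hsig _ _ _ HU). unfold det2 in H. lra.
Qed.

Lemma T1_trans :
  w1 (fun _ _ => 1) hh11 hh12 hh22 y1 y2 z = w1 b g11 g12 g22 x1 x2 z ->
  w1 b g11 g12 g22 x1 x2 z <> 0 ->
  forall k l, T1 s c (fun _ _ => 1) hh11 hh12 hh22 ee1 ee2 k l y1 y2 z =
    sum3 (fun i => sum3 (fun j => jac phi1 phi2 k i x1 x2 * jac phi1 phi2 l j x1 x2 *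
      T1 s c b g11 g12 g22 b1 b2 i j x1 x2 z)).
Proof.
intros HW HW0 k l.
rewrite (sum_ext2 _ (fun i j => jm Kx m k i * jm Kx m l j * T1 s c b g11 g12 g22 b1 b2 i j x1 x2 z))
  by (intros; rewrite !jac_x; reflexivity).
unfold T1, metric1. rewrite HW.
rewrite (ginv_trans (w1 b g11 g12 g22) (w1 (fun _ _ => 1) hh11 hh12 hh22) HW HW0 k l).
destruct k, l; cbv [sum3 jm dzz]; ring.
Qed.

Lemma T2_trans : Kx = b x1 x2 ->
  forall k l, T2 s c (fun _ _ => 1) hh11 hh12 hh22 ee1 ee2 k l y1 y2 z =
    sum3 (fun i => sum3 (fun j => jac phi1 phi2 k i x1 x2 * jac phi1 phi2 l j x1 x2 *
      T2 s c b g11 g12 g22 b1 b2 i j x1 x2 z)).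
Proof.
intros HKb k l.
rewrite (sum_ext2 _ (fun i j => jm Kx m k i * jm Kx m l j * T2 s c b g11 g12 g22 b1 b2 i j x1 x2 z))
  by (intros; rewrite !jac_x; reflexivity).
unfold T2, metric2.
rewrite (ginv_trans (fun _ _ _ => 1) (fun _ _ _ => 1) eq_refl ltac:(lra) k l).
rewrite absg_new.
assert (Ha : 0 < absg g11 g12 g22 x1 x2 z) by (apply sqrt_lt_R0; apply Hsig; auto).
assert (Hk : 0 < Kx) by (apply HKp; auto).
replace (1 / (absg g11 g12 g22 x1 x2 z / Kx)) with (b x1 x2 / absg g11 g12 g22 x1 x2 z)
  by (rewrite <- HKb; field; lra).
destruct k, l; cbv [sum3 jm dzz]; ring.
Qed.

Lemma W_case1 : Kx = b x1 x2 * sqrt (b x1 x2) -> 0 < b x1 x2 ->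
  w1 (fun _ _ => 1) hh11 hh12 hh22 y1 y2 z = w1 b g11 g12 g22 x1 x2 z.
Proof.
intros HKb Hb. unfold w1. rewrite absg_new, Rmult_1_l. rewrite HKb. unfold absg.
apply Rpow_fact; auto. apply Hsig; auto.
Qed.

End Pt.
End Trans.

Lemma open3_sq U x10 x20 z0 : open3 U -> U x10 x20 z0 ->
  exists e, 0 < e /\ forall t y, Rabs (t - x10) < e -> Rabs (y - x20) < e -> U t y z0.
Proof.
intros HU H0. destruct (HU ((x10, x20), z0) H0) as [e He].
exists e. split; [apply cond_pos|]. intros t y Ht Hy.
apply (He ((t, y), z0)). split; [split|]; auto.
change (Rabs (z0 - z0) < e). rewrite Rminus_diag, Rabs_R0. apply cond_pos.
Qed.

Lemma psi_ok (V : R -> R -> Prop) (phi1 phi2 : Field2) :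
  coord_change V phi1 phi2 ->
  let psi := fun y1 y2 => epsilon (inhabits (0, 0))
      (fun p : R * R => V (fst p) (snd p) /\ phi1 (fst p) (snd p) = y1 /\ phi2 (fst p) (snd p) = y2) in
  forall x1 x2, V x1 x2 -> psi (phi1 x1 x2) (phi2 x1 x2) = (x1, x2).
Proof.
intros [_ [_ [Hinj _]]] psi x1 x2 HV.
unfold psi.
match goal with |- epsilon ?i ?P = _ => pose proof (epsilon_spec i P (ex_intro _ (x1, x2) (conj HV (conj eq_refl eq_refl)))) as Hs end.
set (p := epsilon _ _) in *. destruct Hs as [Hp [E1 E2]].
destruct (Hinj _ _ _ _ Hp HV E1 E2) as [F1 F2].
destruct p; simpl in *; subst; reflexivity.
Qed.

Section HKs.
Variables (U : R -> R -> R -> Prop) (b : Field2) (x10 x20 z0 e : R).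
Hypothesis He : 0 < e.
Hypothesis HUe : forall t y, Rabs (t - x10) < e -> Rabs (y - x20) < e -> U t y z0.
Hypothesis Hb : C1_2 (fun x1 x2 => exists z, U x1 x2 z) b.
Hypothesis Hbpos : forall x1 x2 z, U x1 x2 z -> 0 < b x1 x2.

Lemma inD t y : Rabs (t - x10) < e -> Rabs (y - x20) < e ->
  continuous (fun q : R * R => b (fst q) (snd q)) (t, y) /\
  (forall i, ex_pd2 i b t y /\ continuous (fun q : R * R => pd2 i b (fst q) (snd q)) (t, y)) /\
  0 < b t y.
Proof.
intros H1 H2. assert (HU := HUe t y H1 H2).
destruct (Hb t y (ex_intro _ z0 HU)) as [Hc Hd]. split; auto. split; auto.
apply (Hbpos _ _ _ HU).
Qed.

Lemma HK2 t y : Rabs (t - x10) <= e / 2 -> Rabs (y - x20) <= e / 2 ->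
  continuity_2d_pt b t y /\ continuity_2d_pt (pd2 I2 b) t y /\ ex_pd2 I2 b t y /\ 0 < b t y.
Proof.
intros H1 H2. destruct (inD t y ltac:(lra) ltac:(lra)) as [Hc [Hd Hp]].
split; [apply c2_iff; auto|]. split; [apply c2_iff; apply Hd|]. split; auto. apply Hd.
Qed.

Definition kap1 (x1 x2 : R) := b x1 x2 * sqrt (b x1 x2).

Lemma kap1_der t y : Rabs (t - x10) < e -> Rabs (y - x20) < e ->
  is_derive (fun s => kap1 t s) y (3 / 2 * (sqrt (b t y) * pd2 I2 b t y)).
Proof.
intros H1 H2. destruct (inD t y H1 H2) as [Hc [Hd Hp]].
destruct (Hd I2) as [Ed _]. simpl in Ed. unfold kap1.
pose proof (sqrt_lt_R0 _ Hp). pose proof (sqrt_sqrt (b t y) ltac:(lra)).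
auto_derive.
- repeat split; auto.
- simpl. set (sb := sqrt (b t y)) in *. set (B := b t y) in *. clearbody sb.
  rewrite <- H0. field. lra.
Qed.

Lemma HK1 t y : Rabs (t - x10) <= e / 2 -> Rabs (y - x20) <= e / 2 ->
  continuity_2d_pt kap1 t y /\ continuity_2d_pt (pd2 I2 kap1) t y /\ ex_pd2 I2 kap1 t y /\ 0 < kap1 t y.
Proof.
intros H1 H2. destruct (inD t y ltac:(lra) ltac:(lra)) as [Hc [Hd Hp]].
split; [|split; [|split]].
- apply c2_iff. unfold kap1.
  apply (continuous_mult (fun q : R * R => b (fst q) (snd q)) (fun q : R * R => sqrt (b (fst q) (snd q)))); auto.
  apply (continuous_comp (fun q : R * R => b (fst q) (snd q)) sqrt); auto; apply continuous_sqrt.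
- apply c2_iff.
  apply (continuous_ext_loc _ (fun q : R * R => 3 / 2 * (sqrt (b (fst q) (snd q)) * pd2 I2 b (fst q) (snd q)))).
  + assert (Hr : 0 < e / 2) by lra.
    exists (mkposreal _ Hr). intros [u v] [Hu Hv]. simpl in *.
    change (Rabs (u - t) < e / 2) in Hu. change (Rabs (v - y) < e / 2) in Hv.
    symmetry. apply is_derive_unique. apply kap1_der.
    * replace (u - x10) with ((u - t) + (t - x10)) by ring. eapply Rle_lt_trans; [apply Rabs_triang|]. lra.
    * replace (v - x20) with ((v - y) + (y - x20)) by ring. eapply Rle_lt_trans; [apply Rabs_triang|]. lra.
  + apply (continuous_scal_r (3/2) (fun q : R * R => sqrt (b (fst q) (snd q)) * pd2 I2 b (fst q) (snd q))).
    apply (continuous_mult (fun q : R * R => sqrt (b (fst q) (snd q))) (fun q : R * R => pd2 I2 b (fst q) (snd q))).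
    * apply (continuous_comp (fun q : R * R => b (fst q) (snd q)) sqrt); auto; apply continuous_sqrt.
    * apply Hd.
- eexists. apply kap1_der; lra.
- unfold kap1. apply Rmult_lt_0_compat; auto. apply sqrt_lt_R0; auto.
Qed.

End HKs.

Lemma part3 (U : R -> R -> R -> Prop) (g11 g12 g22 : Field3) (b1 b2 b : Field2) (c s : R)
  (HU : open3 U)
  (Hb : C1_2 (fun x1 x2 => exists z, U x1 x2 z) b)
  (Hsig : forall x1 x2 z, U x1 x2 z -> 0 < g11 x1 x2 z /\ 0 < det2 g11 g12 g22 x1 x2 z)
  (Hbpos : forall x1 x2 z, U x1 x2 z -> 0 < b x1 x2) :
  (forall x10 x20 z0, U x10 x20 z0 ->
     exists (V : R -> R -> Prop) (phi1 phi2 : Field2) (h11 h12 h22 : Field3) (e1 e2 : Field2),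
       open2 V /\ V x10 x20 /\ coord_change V phi1 phi2 /\
       transforms_to U V phi1 phi2
         (metric1 b g11 g12 g22 b1 b2) (T1 s c b g11 g12 g22 b1 b2)
         (metric1 (fun _ _ => 1) h11 h12 h22 e1 e2) (T1 s c (fun _ _ => 1) h11 h12 h22 e1 e2)).
Proof.
intros x10 x20 z0 H0.
destruct (open3_sq U x10 x20 z0 HU H0) as [e [He HUe]].
pose (K := kap1 b).
assert (HK := HK1 U b x10 x20 z0 e He HUe Hb Hbpos).
assert (Hd : 0 < e / 2) by lra.
pose (V := Vsq x10 x20 (e / 2)).
pose (phi1 := ph1 K x10).
assert (Hcc : coord_change V ph2 ph2 \/ True) by (right; auto).
assert (Hcc' : coord_change V phi1 ph2) by exact (cc K x10 x20 (e / 2) Hd HK).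
pose (psi := fun y1 y2 => epsilon (inhabits (0, 0))
      (fun p : R * R => V (fst p) (snd p) /\ phi1 (fst p) (snd p) = y1 /\ ph2 (fst p) (snd p) = y2)).
assert (Hpsi : forall x1 x2, V x1 x2 -> psi (phi1 x1 x2) (ph2 x1 x2) = (x1, x2))
  by exact (psi_ok V phi1 ph2 Hcc').
assert (HJ1 : forall x1 x2, V x1 x2 -> pd2 I1 phi1 x1 x2 = K x1 x2).
{ intros x1 x2 HV. apply (pd1_ph1 K x10 x20 (e / 2) Hd HK); auto. }
assert (HJ2 : forall x1 x2, pd2 I1 ph2 x1 x2 = 0 /\ pd2 I2 ph2 x1 x2 = 1).
{ intros; split; [apply pd2_ph2_1| apply pd2_ph2_2]. }
assert (HKp : forall x1 x2, V x1 x2 -> 0 < K x1 x2).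
{ intros x1 x2 [H1 H2]. apply (HK x1 x2); lra. }
exists V, phi1, ph2, (hh11 g11 K psi), (hh12 g11 g12 phi1 K psi), (hh22 g11 g12 g22 phi1 K psi),
  (ee1 b1 K psi), (ee2 b1 b2 phi1 K psi).
split; [apply sq_open|]. split.
{ unfold V, Vsq. rewrite !Rminus_diag, Rabs_R0. lra. }
split; [exact Hcc'|].
intros x1 x2 z HUx HVx.
assert (HW := W_case1 U g11 g12 g22 b1 b2 b V phi1 ph2 K psi Hsig Hpsi HKp x1 x2 z HVx HUx
  eq_refl (Hbpos _ _ _ HUx)).
split.
- intros i j. exact (G_trans g11 g12 g22 b1 b2 V phi1 ph2 K psi Hpsi HJ1 HJ2 HKp x1 x2 z HVx
    (w1 b g11 g12 g22) (w1 (fun _ _ => 1) (hh11 g11 K psi) (hh12 g11 g12 phi1 K psi) (hh22 g11 g12 g22 phi1 K psi)) HW i j).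
- intros k l. apply (T1_trans U g11 g12 g22 b1 b2 b c s V phi1 ph2 K psi Hsig Hpsi HJ1 HJ2 HKp x1 x2 z HVx HUx HW).
  unfold w1. apply Rgt_not_eq. apply Rmult_lt_0_compat; [apply (Hbpos _ _ _ HUx)|].
  unfold Rpower; apply exp_pos.
Qed.

Lemma part4 (U : R -> R -> R -> Prop) (g11 g12 g22 : Field3) (b1 b2 b : Field2) (c s : R)
  (HU : open3 U)
  (Hb : C1_2 (fun x1 x2 => exists z, U x1 x2 z) b)
  (Hsig : forall x1 x2 z, U x1 x2 z -> 0 < g11 x1 x2 z /\ 0 < det2 g11 g12 g22 x1 x2 z)
  (Hbpos : forall x1 x2 z, U x1 x2 z -> 0 < b x1 x2) :
  (forall x10 x20 z0, U x10 x20 z0 ->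
     exists (V : R -> R -> Prop) (phi1 phi2 : Field2) (h11 h12 h22 : Field3) (e1 e2 : Field2),
       open2 V /\ V x10 x20 /\ coord_change V phi1 phi2 /\
       transforms_to U V phi1 phi2
         (metric2 g11 g12 g22 b1 b2) (T2 s c b g11 g12 g22 b1 b2)
         (metric2 h11 h12 h22 e1 e2) (T2 s c (fun _ _ => 1) h11 h12 h22 e1 e2)).
Proof.
intros x10 x20 z0 H0.
destruct (open3_sq U x10 x20 z0 HU H0) as [e [He HUe]].
pose (K := b).
assert (HK := HK2 U b x10 x20 z0 e He HUe Hb Hbpos).
assert (Hd : 0 < e / 2) by lra.
pose (V := Vsq x10 x20 (e / 2)).
pose (phi1 := ph1 K x10).
assert (Hcc' : coord_change V phi1 ph2) by exact (cc K x10 x20 (e / 2) Hd HK).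
pose (psi := fun y1 y2 => epsilon (inhabits (0, 0))
      (fun p : R * R => V (fst p) (snd p) /\ phi1 (fst p) (snd p) = y1 /\ ph2 (fst p) (snd p) = y2)).
assert (Hpsi : forall x1 x2, V x1 x2 -> psi (phi1 x1 x2) (ph2 x1 x2) = (x1, x2))
  by exact (psi_ok V phi1 ph2 Hcc').
assert (HJ1 : forall x1 x2, V x1 x2 -> pd2 I1 phi1 x1 x2 = K x1 x2).
{ intros x1 x2 HV. apply (pd1_ph1 K x10 x20 (e / 2) Hd HK); auto. }
assert (HJ2 : forall x1 x2, pd2 I1 ph2 x1 x2 = 0 /\ pd2 I2 ph2 x1 x2 = 1).
{ intros; split; [apply pd2_ph2_1| apply pd2_ph2_2]. }
assert (HKp : forall x1 x2, V x1 x2 -> 0 < K x1 x2).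
{ intros x1 x2 [H1 H2]. apply (HK x1 x2); lra. }
exists V, phi1, ph2, (hh11 g11 K psi), (hh12 g11 g12 phi1 K psi), (hh22 g11 g12 g22 phi1 K psi),
  (ee1 b1 K psi), (ee2 b1 b2 phi1 K psi).
split; [apply sq_open|]. split.
{ unfold V, Vsq. rewrite !Rminus_diag, Rabs_R0. lra. }
split; [exact Hcc'|].
intros x1 x2 z HUx HVx.
split.
- intros i j. exact (G_trans g11 g12 g22 b1 b2 V phi1 ph2 K psi Hpsi HJ1 HJ2 HKp x1 x2 z HVx
    (fun _ _ _ => 1) (fun _ _ _ => 1) eq_refl i j).
- intros k l. apply (T2_trans U g11 g12 g22 b1 b2 b c s V phi1 ph2 K psi Hsig Hpsi HJ1 HJ2 HKp x1 x2 z HVx HUx eq_refl).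
Qed.

Theorem proposition3p2
  (U : R -> R -> R -> Prop) (g11 g12 g22 : Field3) (b1 b2 b : Field2) (c s : R)
  (HU : open3 U)
  (Hg11 : C1_3 U g11) (Hg12 : C1_3 U g12) (Hg22 : C1_3 U g22)
  (Hb1 : C1_2 (fun x1 x2 => exists z, U x1 x2 z) b1)
  (Hb2 : C1_2 (fun x1 x2 => exists z, U x1 x2 z) b2)
  (Hb : C1_2 (fun x1 x2 => exists z, U x1 x2 z) b)
  (Hsig : forall x1 x2 z, U x1 x2 z -> 0 < g11 x1 x2 z /\ 0 < det2 g11 g12 g22 x1 x2 z)
  (Hbpos : forall x1 x2 z, U x1 x2 z -> 0 < b x1 x2)
  (Hs : s = 1 \/ s = -1) :
  momentum_constraint U (metric1 b g11 g12 g22 b1 b2) (T1 s c b g11 g12 g22 b1 b2) /\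
  momentum_constraint U (metric2 g11 g12 g22 b1 b2) (T2 s c b g11 g12 g22 b1 b2) /\
  (forall x10 x20 z0, U x10 x20 z0 ->
     exists (V : R -> R -> Prop) (phi1 phi2 : Field2) (h11 h12 h22 : Field3) (e1 e2 : Field2),
       open2 V /\ V x10 x20 /\ coord_change V phi1 phi2 /\
       transforms_to U V phi1 phi2
         (metric1 b g11 g12 g22 b1 b2) (T1 s c b g11 g12 g22 b1 b2)
         (metric1 (fun _ _ => 1) h11 h12 h22 e1 e2) (T1 s c (fun _ _ => 1) h11 h12 h22 e1 e2)) /\
  (forall x10 x20 z0, U x10 x20 z0 ->
     exists (V : R -> R -> Prop) (phi1 phi2 : Field2) (h11 h12 h22 : Field3) (e1 e2 : Field2),
       open2 V /\ V x10 x20 /\ coord_change V phi1 phi2 /\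
       transforms_to U V phi1 phi2
         (metric2 g11 g12 g22 b1 b2) (T2 s c b g11 g12 g22 b1 b2)
         (metric2 h11 h12 h22 e1 e2) (T2 s c (fun _ _ => 1) h11 h12 h22 e1 e2)).
Proof.
split; [apply (part1 U g11 g12 g22 b1 b2 b c s); auto|].
split; [apply (part2 U g11 g12 g22 b1 b2 b c s); auto|].
split; [apply (part3 U g11 g12 g22 b1 b2 b c s); auto|].
apply (part4 U g11 g12 g22 b1 b2 b c s); auto.
Qed.
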